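(* Assume $\theta_i<1$ for all $i$ and $\theta_j>0$ for some $j$, and let $\zeta=n\theta_{\mathrm{ave}}-\theta_{\min}$. If $\theta_{\max}<\dfrac{n}{n+2(1+\zeta)}$, then for every $x(0)\in\Delta_n$ the trajectory of system (A) converges exponentially fast to the unique fixed point $x^*$ of $F$ in $\Delta_n$.
   Context: Let $n\ge 2$, $\mathbf 1_n$ the all-ones vector, $I_n$ the identity matrix, $\Delta_n=\{x\in\mathbb R^n: x\ge 0,\ \mathbf 1_n^Tx=1\}$. Let $C\in\mathbb R^{n\times n}$ be a nonnegative row-stochastic matrix with zero diagonal, $\theta=(\theta_1,\dots,\theta_n)\in[0,1]^n$, $\Theta=\mathrm{diag}(\theta)$, and for $x\in\mathbb R^n$, $W(x)=\mathrm{diag}(x)+(I_n-\mathrm{diag}(x))C$. Let $\theta_{\min}=\min_j\theta_j$, $\theta_{\mathrm{ave}}=\frac1n\sum_j\theta_j$, $\theta_{\max}=\max_j\theta_j$. System (A): $x(s+1)=F(x(s))$, $s=0,1,2,\dots$, $x(0)\in\Delta_n$, where $F(x)=(I_n-\Theta)(I_n-W(x)^T\Theta)^{-1}\mathbf 1_n/n$. *)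

(* Defs.v *)
(* classical reals. Vectors in R^n are functions nat -> R read
   on indices 0..n-1; n x n matrices are functions nat -> nat -> R. *)
From Stdlib Require Import Reals Lra Lia Arith ClassicalEpsilon.
Open Scope R_scope.

Fixpoint fsum (n : nat) (f : nat -> R) : R :=
  match n with O => 0 | S k => fsum k f + f k end.

(* max / min over indices 0..n-1 (for n >= 1) *)
Fixpoint fmax (n : nat) (f : nat -> R) : R :=
  match n with O => f O | S k => Rmax (fmax k f) (f k) end.
Fixpoint fmin (n : nat) (f : nat -> R) : R :=
  match n with O => f O | S k => Rmin (fmin k f) (f k) end.

Definition theta_min (n : nat) (theta : nat -> R) : R := fmin n theta.
Definition theta_max (n : nat) (theta : nat -> R) : R := fmax n theta.
Definition theta_ave (n : nat) (theta : nat -> R) : R := fsum n theta / INR n.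

Definition in_simplex (n : nat) (x : nat -> R) : Prop :=
  (forall i, (i < n)%nat -> 0 <= x i) /\ fsum n x = 1.

(* W(x) = diag(x) + (I - diag(x)) C *)
Definition Wmat (C : nat -> nat -> R) (x : nat -> R) : nat -> nat -> R :=
  fun i j => (if Nat.eqb i j then x i else 0) + (1 - x i) * C i j.

(* I - W(x)^T Theta *)
Definition Mmat (C : nat -> nat -> R) (theta : nat -> R) (x : nat -> R)
  : nat -> nat -> R :=
  fun i j => (if Nat.eqb i j then 1 else 0) - Wmat C x j i * theta j.

(* M^{-1} b : the solution z of M z = b (well defined when M is invertible,
   which is the case for x in the simplex and theta_i < 1). *)
Definition solve (n : nat) (M : nat -> nat -> R) (b : nat -> R) : nat -> R :=
  epsilon (inhabits (fun _ : nat => 0))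
    (fun z => forall i, (i < n)%nat -> fsum n (fun j => M i j * z j) = b i).

(* F(x) = (I - Theta) (I - W(x)^T Theta)^{-1} 1_n / n *)
Definition Fmap (n : nat) (C : nat -> nat -> R) (theta : nat -> R)
  (x : nat -> R) : nat -> R :=
  fun i => (1 - theta i) * solve n (Mmat C theta x) (fun _ => 1 / INR n) i.

Fixpoint traj (n : nat) (C : nat -> nat -> R) (theta : nat -> R)
  (x0 : nat -> R) (s : nat) : nat -> R :=
  match s with
  | O => x0
  | S k => Fmap n C theta (traj n C theta x0 k)
  end.

Definition is_fixed (n : nat) (C : nat -> nat -> R) (theta : nat -> R)
  (x : nat -> R) : Prop :=
  forall i, (i < n)%nat -> Fmap n C theta x i = x i.

(* Main.v *)
Require Import Defs.
From Stdlib Require Import Reals Lra Lia Arith ClassicalEpsilon FunctionalExtensionality.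
Open Scope R_scope.

Lemma fsum_ext n f g : (forall i, (i < n)%nat -> f i = g i) -> fsum n f = fsum n g.
Proof. induction n; simpl; intros H; auto. rewrite IHn by (intros; apply H; lia). rewrite (H n) by lia; auto. Qed.

Lemma fsum_plus n f g : fsum n (fun i => f i + g i) = fsum n f + fsum n g.
Proof. induction n; simpl; [lra|]. rewrite IHn; lra. Qed.

Lemma fsum_minus n f g : fsum n (fun i => f i - g i) = fsum n f - fsum n g.
Proof. induction n; simpl; [lra|]. rewrite IHn; lra. Qed.

Lemma fsum_scal n c f : fsum n (fun i => c * f i) = c * fsum n f.
Proof. induction n; simpl; [lra|]. rewrite IHn; lra. Qed.

Lemma fsum_const n c : fsum n (fun _ => c) = INR n * c.
Proof. induction n; simpl fsum; [simpl; lra|]. rewrite IHn, S_INR; lra. Qed.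

Lemma fsum_le n f g : (forall i, (i < n)%nat -> f i <= g i) -> fsum n f <= fsum n g.
Proof. induction n; simpl; intros H; [lra|]. assert (f n <= g n) by (apply H; lia).
  assert (fsum n f <= fsum n g) by (apply IHn; intros; apply H; lia). lra. Qed.

Lemma fsum_nonneg n f : (forall i, (i < n)%nat -> 0 <= f i) -> 0 <= fsum n f.
Proof. intros H. replace 0 with (fsum n (fun _ => 0)). apply fsum_le; auto.
  rewrite fsum_const; lra. Qed.

Lemma fsum_abs n f : Rabs (fsum n f) <= fsum n (fun i => Rabs (f i)).
Proof. induction n; simpl. rewrite Rabs_R0; lra.
  eapply Rle_trans. apply Rabs_triang. lra. Qed.

Lemma fsum_swap n m (f : nat -> nat -> R) :
  fsum n (fun i => fsum m (fun j => f i j)) = fsum m (fun j => fsum n (fun i => f i j)).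
Proof. induction n; simpl. rewrite fsum_const; simpl; lra.
  rewrite IHn, <- fsum_plus. reflexivity. Qed.

Lemma fsum_delta n i (a : nat -> R) : (i < n)%nat ->
  fsum n (fun j => if Nat.eqb i j then a j else 0) = a i.
Proof.
  assert (forall n, fsum n (fun j => if Nat.eqb i j then a j else 0) = if Nat.ltb i n then a i else 0).
  { induction n0; simpl; auto. rewrite IHn0.
    destruct (Nat.eqb_spec i n0), (Nat.ltb_spec i n0), (Nat.ltb_spec i (S n0)); subst; try lia; lra. }
  intros Hi. rewrite H. destruct (Nat.ltb_spec i n); auto; lia. Qed.

Lemma fsum_delta' n i (a : nat -> R) : (i < n)%nat ->
  fsum n (fun j => if Nat.eqb j i then a j else 0) = a i.
Proof. intros Hi. rewrite <- (fsum_delta n i a Hi). apply fsum_ext; intros.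
  rewrite Nat.eqb_sym; auto. Qed.

Lemma fsum_term_le n f i : (forall j, (j < n)%nat -> 0 <= f j) -> (i < n)%nat -> f i <= fsum n f.
Proof. induction n; simpl; intros H Hi; [lia|].
  assert (0 <= fsum n f) by (apply fsum_nonneg; intros; apply H; lia).
  destruct (Nat.eq_dec i n). subst; lra.
  assert (f i <= fsum n f) by (apply IHn; [intros; apply H; lia| lia]).
  assert (0 <= f n) by (apply H; lia). lra. Qed.

Lemma cv_const0 : Un_cv (fun _ : nat => 0) 0.
Proof. intros e He; exists O; intros; unfold R_dist; rewrite Rminus_0_r, Rabs_R0; lra. Qed.

Lemma fsum_cv n (u : nat -> nat -> R) L :
  (forall i, (i < n)%nat -> Un_cv (fun s => u s i) (L i)) ->
  Un_cv (fun s => fsum n (u s)) (fsum n L).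
Proof. induction n; simpl; intros H. apply cv_const0.
  apply CV_plus. apply IHn; intros; apply H; lia. apply H; lia. Qed.

Lemma fmax_ge n f i : (i < n)%nat -> f i <= fmax n f.
Proof. induction n; simpl; intros Hi; [lia|].
  destruct (Nat.eq_dec i n). subst; apply Rmax_r.
  eapply Rle_trans. apply IHn; lia. apply Rmax_l. Qed.

Lemma fmax_le n f B : (0 < n)%nat -> (forall i, (i < n)%nat -> f i <= B) -> fmax n f <= B.
Proof. induction n; simpl; intros Hn H; [lia|]. apply Rmax_lub.
  destruct n. simpl; apply H; lia. apply IHn; [lia|]; intros; apply H; lia.
  apply H; lia. Qed.

Lemma fmax_lt n f B : (0 < n)%nat -> (forall i, (i < n)%nat -> f i < B) -> fmax n f < B.
Proof. induction n; simpl; intros Hn H; [lia|]. apply Rmax_lub_lt.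
  destruct n. simpl; apply H; lia. apply IHn; [lia|]; intros; apply H; lia.
  apply H; lia. Qed.

Lemma fmax_extQ m f g : (forall i, (i <= m)%nat -> f i = g i) -> fmax m f = fmax m g.
Proof. induction m; simpl; intros H. apply H; lia.
  rewrite IHm by (intros; apply H; lia). rewrite (H m) by lia; auto. Qed.

Lemma fmax_ext n f g : (0 < n)%nat -> (forall i, (i < n)%nat -> f i = g i) -> fmax n f = fmax n g.
Proof. destruct n; intros Hn H; [lia|]. simpl. rewrite (fmax_extQ n f g) by (intros; apply H; lia).
  rewrite (H n) by lia; auto. Qed.

Lemma fmin_le n f i : (i < n)%nat -> fmin n f <= f i.
Proof. induction n; simpl; intros Hi; [lia|].
  destruct (Nat.eq_dec i n). subst; apply Rmin_r.
  eapply Rle_trans. apply Rmin_l. apply IHn; lia. Qed.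

Fixpoint it (T : (nat -> R) -> (nat -> R)) (x : nat -> R) (s : nat) : nat -> R :=
  match s with O => x | S k => T (it T x k) end.

Lemma abs0 r : Rabs r <= 0 -> r = 0.
Proof. unfold Rabs; destruct Rcase_abs; lra. Qed.

Lemma powsmall q K : 0 <= q < 1 -> 0 <= K -> forall e, 0 < e -> exists M, forall m, (m >= M)%nat -> K * q ^ m < e.
Proof. intros Hq HK e He.
  assert (Rabs q < 1) by (rewrite Rabs_right; lra).
  destruct (pow_lt_1_zero q H (e / (K + 1))) as [M HM]. apply Rdiv_lt_0_compat; lra.
  exists M; intros m Hm. specialize (HM m Hm). rewrite Rabs_right in HM by (apply Rle_ge, pow_le; lra).
  assert (0 <= q ^ m) by (apply pow_le; lra).
  apply Rmult_lt_compat_r with (r := K + 1) in HM; [|lra].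
  unfold Rdiv in HM; rewrite Rmult_assoc, Rinv_l, Rmult_1_r in HM by lra. nra. Qed.

Lemma banach n N P T q :
 (0 < n)%nat ->
 (forall u i, (i < n)%nat -> Rabs (u i) <= N u) ->
 (forall u, N u <= fsum n (fun i => Rabs (u i))) ->
 (forall u v, N (fun i => u i + v i) <= N u + N v) ->
 (forall u, N (fun i => - u i) = N u) ->
 0 <= q < 1 ->
 (forall u, P u -> P (T u)) ->
 (forall u v, P u -> P v -> N (fun i => T u i - T v i) <= q * N (fun i => u i - v i)) ->
 (forall (u : nat -> nat -> R) L, (forall s, P (u s)) ->
     (forall i, (i < n)%nat -> Un_cv (fun s => u s i) (L i)) -> P L) ->
 forall x0, P x0 -> exists L, P L /\ (forall i, (i < n)%nat -> T L i = L i) /\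
   exists c, 0 <= c /\ forall s, N (fun i => it T x0 s i - L i) <= c * q ^ s.
Proof.
  intros Hn N1 N2 N3 N5 Hq ST Hc Hcl x0 Sx0.
  assert (Nnn : forall u, 0 <= N u) by (intros u; eapply Rle_trans; [apply Rabs_pos| apply (N1 u 0%nat Hn)]).
  assert (Ntri : forall a b c, N (fun i => a i - c i) <= N (fun i => a i - b i) + N (fun i => b i - c i)).
  { intros a b c. replace (fun i => a i - c i) with (fun i => (a i - b i) + (b i - c i)) by
      (apply functional_extensionality; intros; ring). apply N3. }
  assert (Nsym : forall a b, N (fun i => a i - b i) = N (fun i => b i - a i)).
  { intros a b. rewrite <- N5. f_equal. apply functional_extensionality; intros; ring. }
  assert (N0 : forall a, N (fun i => a i - a i) <= 0).
  { intros a. eapply Rle_trans. apply N2. rewrite (fsum_ext _ _ (fun _ => 0)).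
    rewrite fsum_const; lra. intros; rewrite Rminus_diag, Rabs_R0; auto. }
  set (x := it T x0).
  assert (Sx : forall s, P (x s)) by (intros s; induction s as [|s IH]; [exact Sx0| apply ST; exact IH]).
  set (D := N (fun i => x 1%nat i - x 0%nat i)).
  assert (HD : 0 <= D) by apply Nnn.
  assert (step : forall s, N (fun i => x (S s) i - x s i) <= q ^ s * D).
  { induction s. simpl; fold D; lra.
    change (x (S (S s))) with (T (x (S s))). change (x (S s)) with (T (x s)) at 2.
    eapply Rle_trans. apply Hc; auto. change (T (x s)) with (x (S s)). simpl.
    assert (0 <= q) by lra. nra. }
  set (K := D / (1 - q)).
  assert (HK : 0 <= K) by (unfold K, Rdiv; apply Rmult_le_pos; [lra| left; apply Rinv_0_lt_compat; lra]).
  assert (cau : forall s k, N (fun i => x (s + k)%nat i - x s i) <= K * (q ^ s - q ^ (s + k))).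
  { intros s; induction k. rewrite Nat.add_0_r, Rminus_diag, Rmult_0_r; apply N0.
    eapply Rle_trans. apply (Ntri _ (x (s + k)%nat)).
    replace (s + S k)%nat with (S (s + k)) by lia.
    assert (H1 := step (s + k)%nat).
    replace (K * (q ^ s - q ^ S (s + k))) with (K * (q ^ s - q ^ (s + k)) + q ^ (s + k) * D).
    lra. unfold K; simpl; field; lra. }
  assert (cau2 : forall s k i, (i < n)%nat -> Rabs (x (s + k)%nat i - x s i) <= K * q ^ s).
  { intros s k i Hi. eapply Rle_trans. apply (N1 (fun j => x (s + k)%nat j - x s j) i Hi). eapply Rle_trans. apply cau.
    assert (0 <= q ^ (s + k)) by (apply pow_le; lra). nra. }
  assert (Hex : forall i, (i < n)%nat -> exists l, Un_cv (fun s => x s i) l).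
  { intros i Hi. assert (Cauchy_crit (fun s => x s i)).
    { intros e He. destruct (powsmall q K Hq HK e He) as [M HM]. exists M. intros a b Ha Hb.
      unfold R_dist. destruct (le_lt_dec a b).
      - replace b with (a + (b - a))%nat by lia. rewrite <- Rabs_Ropp, Ropp_minus_distr.
        eapply Rle_lt_trans. apply cau2; auto. apply HM; lia.
      - replace a with (b + (a - b))%nat by lia.
        eapply Rle_lt_trans. apply cau2; auto. apply HM; lia. }
    destruct (R_complete _ H) as [l Hl]. exists l; auto. }
  set (L := fun i => epsilon (inhabits 0) (fun l => Un_cv (fun s => x s i) l)).
  assert (HL : forall i, (i < n)%nat -> Un_cv (fun s => x s i) (L i)).
  { intros i Hi. unfold L. apply epsilon_spec. apply Hex; auto. }
  assert (bnd : forall s, N (fun i => x s i - L i) <= K * q ^ s).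
  { intros s. apply Rle_plus_epsilon. intros e He.
    assert (Hcv : Un_cv (fun t => fsum n (fun i => Rabs (x t i - L i))) (fsum n (fun _ => 0))).
    { apply (fsum_cv n (fun t i => Rabs (x t i - L i)) (fun _ => 0)). intros i Hi e' He'.
      destruct (HL i Hi e' He') as [M HM]. exists M. intros m Hm. specialize (HM m Hm).
      unfold R_dist in *. rewrite Rminus_0_r, Rabs_Rabsolu; auto. }
    rewrite fsum_const, Rmult_0_r in Hcv. destruct (Hcv e He) as [M HM].
    specialize (HM (s + M)%nat ltac:(lia)). unfold R_dist in HM. rewrite Rminus_0_r in HM.
    eapply Rle_trans. apply (Ntri _ (x (s + M)%nat)). rewrite Nsym.
    assert (H1 := cau s M). assert (0 <= q ^ (s + M)) by (apply pow_le; lra).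
    assert (H2 := N2 (fun i => x (s + M)%nat i - L i)).
    assert (H3 := Rle_abs (fsum n (fun i => Rabs (x (s + M)%nat i - L i)))). nra. }
  assert (SL : P L) by (apply (Hcl x L Sx HL)).
  exists L. split; [auto|split].
  - assert (HN : N (fun i => T L i - L i) <= 0).
    { apply Rle_plus_epsilon. intros e He.
      destruct (powsmall q K Hq HK (e / 2) ltac:(lra)) as [M HM]. specialize (HM M (le_n M)).
      eapply Rle_trans. apply (Ntri _ (x (S M))).
      change (x (S M)) with (T (x M)).
      assert (H1 := Hc L (x M) SL (Sx M)). rewrite (Nsym L (x M)) in H1.
      assert (H2 := bnd (S M)). change (x (S M)) with (T (x M)) in H2.
      assert (H3 := bnd M). simpl in H2. assert (0 <= q ^ M) by (apply pow_le; lra).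
      assert (q * N (fun i => x M i - L i) <= q * (K * q ^ M)) by (apply Rmult_le_compat_l; lra).
      assert (K * (q * q ^ M) <= K * q ^ M) by (apply Rmult_le_compat_l; [lra| nra]).
      assert (q * (K * q ^ M) <= K * q ^ M) by nra.
      lra. }
    intros i Hi. apply Rminus_diag_uniq, abs0. eapply Rle_trans. apply (N1 (fun j => T L j - L j) i Hi). auto.
  - exists K; split; auto.
Qed.

Lemma banach_unique n N T q u v :
 (0 < n)%nat ->
 (forall u i, (i < n)%nat -> Rabs (u i) <= N u) ->
 (forall u v, (forall i, (i < n)%nat -> u i = v i) -> N u = N v) ->
 0 <= q < 1 ->
 (forall i, (i < n)%nat -> T u i = u i) -> (forall i, (i < n)%nat -> T v i = v i) ->
 N (fun i => T u i - T v i) <= q * N (fun i => u i - v i) ->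
 forall i, (i < n)%nat -> u i = v i.
Proof. intros Hn N1 N4 Hq Hu Hv Hc.
  rewrite (N4 (fun i => T u i - T v i) (fun i => u i - v i)) in Hc by (intros; rewrite Hu, Hv; auto).
  assert (0 <= N (fun i => u i - v i)) by (eapply Rle_trans; [apply Rabs_pos| apply (N1 _ 0%nat Hn)]).
  assert (N (fun i => u i - v i) <= 0) by nra.
  intros i Hi. apply Rminus_diag_uniq, abs0. eapply Rle_trans. apply (N1 (fun j => u j - v j) i Hi). auto. Qed.

Definition hypC n (C : nat -> nat -> R) :=
  (forall i j, (i < n)%nat -> (j < n)%nat -> 0 <= C i j) /\
  (forall i, (i < n)%nat -> fsum n (fun j => C i j) = 1).
Definition hypT n (theta : nat -> R) := forall i, (i < n)%nat -> 0 <= theta i < 1.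
Definition xb n (x : nat -> R) := forall i, (i < n)%nat -> 0 <= x i <= 1.
Definition Amat (C : nat -> nat -> R) (theta x : nat -> R) i j := Wmat C x j i * theta j.
Definition N1n n (u : nat -> R) := fsum n (fun i => Rabs (u i)).
Definition Ninf n (u : nat -> R) := fmax n (fun i => Rabs (u i)).

Lemma W_nonneg n C x k j : hypC n C -> xb n x -> (k < n)%nat -> (j < n)%nat -> 0 <= Wmat C x k j.
Proof. intros [HC _] Hx Hk Hj. unfold Wmat. specialize (HC k j Hk Hj). specialize (Hx k Hk).
  destruct (Nat.eqb k j); nra. Qed.

Lemma W_rows n C x k : hypC n C -> xb n x -> (k < n)%nat -> fsum n (fun j => Wmat C x k j) = 1.
Proof. intros [_ HC] Hx Hk. unfold Wmat. rewrite fsum_plus.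
  rewrite (fsum_scal n (1 - x k) (fun j => C k j)), (HC k Hk).
  rewrite (fsum_delta n k (fun _ => x k)) by auto. lra. Qed.

Lemma A_nonneg n C th x i j : hypC n C -> hypT n th -> xb n x -> (i < n)%nat -> (j < n)%nat -> 0 <= Amat C th x i j.
Proof. intros HC HT Hx Hi Hj. unfold Amat. apply Rmult_le_pos. apply (W_nonneg n); auto. apply HT; auto. Qed.

Lemma A_col n C th x j : hypC n C -> xb n x -> (j < n)%nat -> fsum n (fun i => Amat C th x i j) = th j.
Proof. intros HC Hx Hj. unfold Amat. rewrite (fsum_ext _ _ (fun i => th j * Wmat C x j i)) by (intros; ring).
  rewrite fsum_scal, (W_rows n) by auto. ring. Qed.

Lemma Mmat_eq n C th x z i : (i < n)%nat ->
  fsum n (fun j => Mmat C th x i j * z j) = z i - fsum n (fun j => Amat C th x i j * z j).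
Proof. intros Hi. unfold Mmat, Amat.
  rewrite (fsum_ext _ _ (fun j => (if Nat.eqb i j then z j else 0) - Wmat C x j i * th j * z j)).
  rewrite fsum_minus, fsum_delta; auto.
  intros j Hj. destruct (Nat.eqb i j); ring. Qed.

Lemma tmax_ge n th j : (j < n)%nat -> th j <= fmax n th.
Proof. apply fmax_ge. Qed.

Lemma tmax_lt n th : (0 < n)%nat -> hypT n th -> fmax n th < 1.
Proof. intros Hn HT. apply fmax_lt; auto. intros; apply HT; auto. Qed.

Lemma tmax_nn n th : (0 < n)%nat -> hypT n th -> 0 <= fmax n th.
Proof. intros Hn HT. eapply Rle_trans. apply (HT 0%nat Hn). apply fmax_ge; auto. Qed.

Lemma cv_nonneg (u : nat -> R) l : (forall s, 0 <= u s) -> Un_cv u l -> 0 <= l.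
Proof. intros H Hc. destruct (Rle_lt_dec 0 l); auto.
  destruct (Hc (- l) ltac:(lra)) as [M HM]. specialize (HM M (le_n M)). specialize (H M).
  unfold R_dist in HM. unfold Rabs in HM; destruct Rcase_abs in HM; lra. Qed.

Lemma N1n_1 n u i : (i < n)%nat -> Rabs (u i) <= N1n n u.
Proof. intros Hi. unfold N1n. apply (fsum_term_le n (fun i => Rabs (u i))); auto. intros; apply Rabs_pos. Qed.
Lemma N1n_2 n u : N1n n u <= fsum n (fun i => Rabs (u i)).
Proof. unfold N1n; lra. Qed.
Lemma N1n_3 n u v : N1n n (fun i => u i + v i) <= N1n n u + N1n n v.
Proof. unfold N1n. rewrite <- fsum_plus. apply fsum_le. intros; apply Rabs_triang. Qed.
Lemma N1n_4 n u v : (forall i, (i < n)%nat -> u i = v i) -> N1n n u = N1n n v.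
Proof. intros H. unfold N1n. apply fsum_ext. intros; rewrite H; auto. Qed.
Lemma N1n_5 n u : N1n n (fun i => - u i) = N1n n u.
Proof. unfold N1n. apply fsum_ext. intros; apply Rabs_Ropp. Qed.

Lemma Ninf_1 n u i : (i < n)%nat -> Rabs (u i) <= Ninf n u.
Proof. intros Hi. unfold Ninf. apply (fmax_ge n (fun i => Rabs (u i))); auto. Qed.
Lemma Ninf_2 n u : (0 < n)%nat -> Ninf n u <= fsum n (fun i => Rabs (u i)).
Proof. intros Hn. unfold Ninf. apply fmax_le; auto. intros i Hi.
  apply (fsum_term_le n (fun i => Rabs (u i))); auto. intros; apply Rabs_pos. Qed.
Lemma Ninf_3 n u v : (0 < n)%nat -> Ninf n (fun i => u i + v i) <= Ninf n u + Ninf n v.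
Proof. intros Hn. apply fmax_le; auto. intros i Hi. eapply Rle_trans. apply Rabs_triang.
  assert (H1 := Ninf_1 n u i Hi). assert (H2 := Ninf_1 n v i Hi). lra. Qed.
Lemma Ninf_4 n u v : (0 < n)%nat -> (forall i, (i < n)%nat -> u i = v i) -> Ninf n u = Ninf n v.
Proof. intros Hn H. unfold Ninf. apply fmax_ext; auto. intros; rewrite H; auto. Qed.
Lemma Ninf_5 n u : (0 < n)%nat -> Ninf n (fun i => - u i) = Ninf n u.
Proof. intros Hn. unfold Ninf. apply fmax_ext; auto. intros; apply Rabs_Ropp. Qed.

Definition Tz n C th x (b : nat -> R) (z : nat -> R) : nat -> R :=
  fun i => b i + fsum n (fun j => Amat C th x i j * z j).

Lemma Tz_contr n C th x b u v : hypC n C -> hypT n th -> xb n x -> (0 < n)%nat ->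
  N1n n (fun i => Tz n C th x b u i - Tz n C th x b v i) <= fmax n th * N1n n (fun i => u i - v i).
Proof. intros HC HT Hx Hn. unfold N1n, Tz.
  eapply Rle_trans with (fsum n (fun i => fsum n (fun j => Amat C th x i j * Rabs (u j - v j)))).
  { apply fsum_le. intros i Hi.
    replace (b i + fsum n (fun j => Amat C th x i j * u j) - (b i + fsum n (fun j => Amat C th x i j * v j)))
      with (fsum n (fun j => Amat C th x i j * (u j - v j))).
    eapply Rle_trans. apply fsum_abs. apply fsum_le. intros j Hj. rewrite Rabs_mult.
    rewrite (Rabs_right (Amat _ _ _ _ _)) by (apply Rle_ge, (A_nonneg n); auto). lra.
    rewrite (fsum_ext _ _ (fun j => Amat C th x i j * u j - Amat C th x i j * v j)) by (intros; ring).
    rewrite fsum_minus. ring. }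
  rewrite fsum_swap. rewrite <- fsum_scal. apply fsum_le. intros j Hj.
  rewrite (fsum_ext _ _ (fun i => Rabs (u j - v j) * Amat C th x i j)) by (intros; ring).
  rewrite fsum_scal, (A_col n) by auto. assert (H := tmax_ge n th j Hj). assert (0 <= Rabs (u j - v j)) by apply Rabs_pos.
  nra. Qed.

Lemma Tz_exists n C th x b : hypC n C -> hypT n th -> xb n x -> (0 < n)%nat ->
  (forall i, (i < n)%nat -> 0 <= b i) ->
  exists z, (forall i, (i < n)%nat -> 0 <= z i) /\ (forall i, (i < n)%nat -> Tz n C th x b z i = z i).
Proof. intros HC HT Hx Hn Hb.
  destruct (banach n (N1n n) (fun z => forall i, (i < n)%nat -> 0 <= z i) (Tz n C th x b) (fmax n th) Hn
    (N1n_1 n) (N1n_2 n) (N1n_3 n) (N1n_5 n)) with (x0 := fun _ : nat => 0)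
    as [L [HL1 [HL2 _]]].
  - split; [apply tmax_nn| apply tmax_lt]; auto.
  - intros u Hu i Hi. unfold Tz. assert (0 <= b i) by auto.
    assert (0 <= fsum n (fun j => Amat C th x i j * u j)).
    { apply fsum_nonneg. intros j Hj. apply Rmult_le_pos; auto. apply (A_nonneg n); auto. }
    lra.
  - intros u v _ _. apply Tz_contr; auto.
  - intros u L Hu HL i Hi. apply (cv_nonneg (fun s => u s i)); auto.
  - intros; lra.
  - exists L; auto.
Qed.

Lemma Tz_unique n C th x b u v : hypC n C -> hypT n th -> xb n x -> (0 < n)%nat ->
  (forall i, (i < n)%nat -> Tz n C th x b u i = u i) ->
  (forall i, (i < n)%nat -> Tz n C th x b v i = v i) ->
  forall i, (i < n)%nat -> u i = v i.
Proof. intros HC HT Hx Hn Hu Hv.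
  apply (banach_unique n (N1n n) (Tz n C th x b) (fmax n th)); auto.
  apply N1n_1. apply N1n_4. split; [apply tmax_nn| apply tmax_lt]; auto.
  apply Tz_contr; auto. Qed.

Definition zsol n C th x := solve n (Mmat C th x) (fun _ => 1 / INR n).

Lemma zsol_spec n C th x : hypC n C -> hypT n th -> xb n x -> (0 < n)%nat ->
  (forall i, (i < n)%nat -> 0 <= zsol n C th x i) /\
  (forall i, (i < n)%nat -> zsol n C th x i = 1 / INR n + fsum n (fun j => Amat C th x i j * zsol n C th x j)).
Proof. intros HC HT Hx Hn.
  assert (Hb : forall i, (i < n)%nat -> 0 <= (fun _ : nat => 1 / INR n) i).
  { intros. unfold Rdiv; rewrite Rmult_1_l. left; apply Rinv_0_lt_compat, lt_0_INR; auto. }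
  destruct (Tz_exists n C th x _ HC HT Hx Hn Hb) as [z [Hz1 Hz2]].
  assert (Hs : forall i, (i < n)%nat -> fsum n (fun j => Mmat C th x i j * zsol n C th x j) = 1 / INR n).
  { unfold zsol, solve. apply (epsilon_spec (inhabits (fun _ : nat => 0))
      (fun z => forall i, (i < n)%nat -> fsum n (fun j => Mmat C th x i j * z j) = 1 / INR n)).
    exists z. intros i Hi. rewrite Mmat_eq by auto. rewrite <- (Hz2 i Hi) at 1. unfold Tz; ring. }
  assert (Hfix : forall i, (i < n)%nat -> Tz n C th x (fun _ => 1 / INR n) (zsol n C th x) i = zsol n C th x i).
  { intros i Hi. specialize (Hs i Hi). rewrite Mmat_eq in Hs by auto. unfold Tz. lra. }
  assert (Heq := Tz_unique n C th x _ _ _ HC HT Hx Hn Hfix Hz2).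
  split.
  - intros i Hi. rewrite Heq; auto.
  - intros i Hi. rewrite <- (Hfix i Hi) at 1. unfold Tz; auto.
Qed.

Lemma zsol_sum n C th x : hypC n C -> hypT n th -> xb n x -> (0 < n)%nat ->
  fsum n (fun i => (1 - th i) * zsol n C th x i) = 1.
Proof. intros HC HT Hx Hn. destruct (zsol_spec n C th x HC HT Hx Hn) as [_ Hz].
  set (z := zsol n C th x) in *.
  assert (E : fsum n z = fsum n (fun _ => 1 / INR n) + fsum n (fun i => fsum n (fun j => Amat C th x i j * z j))).
  { rewrite <- fsum_plus. apply fsum_ext; auto. }
  rewrite fsum_const, fsum_swap in E.
  rewrite (fsum_ext n (fun j => fsum n (fun i => Amat C th x i j * z j)) (fun j => th j * z j)) in E.
  rewrite (fsum_ext _ _ (fun i => z i - th i * z i)) by (intros; ring).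
  rewrite fsum_minus, E. field. apply not_0_INR; lia.
  intros j Hj. rewrite (fsum_ext _ _ (fun i => z j * Amat C th x i j)) by (intros; ring).
  rewrite fsum_scal, (A_col n) by auto. ring. Qed.

Definition Tg n C (th x : nat -> R) i (g : nat -> R) : nat -> R :=
  fun k => (if Nat.eqb i k then 1 else 0) + th k * fsum n (fun j => Wmat C x k j * g j).

Lemma Tg_contr n C th x i u v : hypC n C -> hypT n th -> xb n x -> (0 < n)%nat ->
  Ninf n (fun k => Tg n C th x i u k - Tg n C th x i v k) <= fmax n th * Ninf n (fun k => u k - v k).
Proof. intros HC HT Hx Hn. unfold Ninf at 1. apply fmax_le; auto. intros k Hk. unfold Tg.
  replace ((if Nat.eqb i k then 1 else 0) + th k * fsum n (fun j => Wmat C x k j * u j) -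
    ((if Nat.eqb i k then 1 else 0) + th k * fsum n (fun j => Wmat C x k j * v j)))
    with (th k * fsum n (fun j => Wmat C x k j * (u j - v j))).
  2:{ rewrite (fsum_ext _ _ (fun j => Wmat C x k j * u j - Wmat C x k j * v j)) by (intros; ring).
      rewrite fsum_minus. ring. }
  set (m := Ninf n (fun k => u k - v k)).
  assert (H1 : Rabs (fsum n (fun j => Wmat C x k j * (u j - v j))) <= m).
  { eapply Rle_trans. apply fsum_abs.
    eapply Rle_trans with (fsum n (fun j => m * Wmat C x k j)).
    apply fsum_le. intros j Hj. rewrite Rabs_mult, Rabs_right by (apply Rle_ge, (W_nonneg n); auto).
    assert (0 <= Wmat C x k j) by (apply (W_nonneg n); auto).
    assert (Rabs (u j - v j) <= m) by (apply (Ninf_1 n (fun k => u k - v k)); auto). nra.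
    rewrite fsum_scal, (W_rows n) by auto. lra. }
  rewrite Rabs_mult, Rabs_right by (apply Rle_ge; apply HT; auto).
  assert (0 <= m) by (eapply Rle_trans; [apply Rabs_pos| apply (Ninf_1 n (fun k => u k - v k) k Hk)]).
  assert (th k <= fmax n th) by (apply fmax_ge; auto). assert (0 <= th k) by (apply HT; auto).
  assert (0 <= Rabs (fsum n (fun j => Wmat C x k j * (u j - v j)))) by apply Rabs_pos. nra. Qed.

Lemma g_exists n C th x i : hypC n C -> hypT n th -> xb n x -> (0 < n)%nat ->
  exists g, (forall k, (k < n)%nat -> 0 <= g k) /\ (forall k, (k < n)%nat -> Tg n C th x i g k = g k).
Proof. intros HC HT Hx Hn.
  destruct (banach n (Ninf n) (fun z => forall k, (k < n)%nat -> 0 <= z k) (Tg n C th x i) (fmax n th) Hn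
    (Ninf_1 n) (fun u => Ninf_2 n u Hn) (fun u v => Ninf_3 n u v Hn) (fun u => Ninf_5 n u Hn)) with (x0 := fun _ : nat => 0)
    as [L [HL1 [HL2 _]]].
  - split; [apply tmax_nn| apply tmax_lt]; auto.
  - intros u Hu k Hk. unfold Tg. assert (0 <= (if Nat.eqb i k then 1 else 0)) by (destruct (Nat.eqb i k); lra).
    assert (0 <= fsum n (fun j => Wmat C x k j * u j)).
    { apply fsum_nonneg. intros j Hj. apply Rmult_le_pos; auto. apply (W_nonneg n); auto. }
    assert (0 <= th k) by (apply HT; auto). nra.
  - intros u v _ _. apply Tg_contr; auto.
  - intros u L Hu HL k Hk. apply (cv_nonneg (fun s => u s k)); auto.
  - intros; lra.
  - exists L; auto.
Qed.

Lemma zbound n C th x i : hypC n C -> hypT n th -> xb n x -> (0 < n)%nat -> (i < n)%nat ->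
  INR n * (1 - th i) * zsol n C th x i <= 1 + fsum n th - th i.
Proof. intros HC HT Hx Hn Hi.
  destruct (zsol_spec n C th x HC HT Hx Hn) as [Hz0 Hz].
  set (z := zsol n C th x) in *.
  destruct (g_exists n C th x i HC HT Hx Hn) as [g [Hg0 Hg]].
  unfold Tg in Hg.
  (* duality *)
  assert (Hdual : z i = 1 / INR n * fsum n g).
  { assert (E1 : fsum n (fun k => g k * z k) = fsum n (fun k => (if Nat.eqb i k then z k else 0) +
          fsum n (fun j => th k * Wmat C x k j * g j * z k))).
    { apply fsum_ext. intros k Hk. rewrite <- (Hg k Hk) at 1.
      rewrite (fsum_ext n (fun j => th k * Wmat C x k j * g j * z k) (fun j => (th k * z k) * (Wmat C x k j * g j))) by (intros; ring).
      rewrite fsum_scal. destruct (Nat.eqb i k); ring. }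
    rewrite fsum_plus, fsum_delta in E1 by auto.
    assert (E2 : fsum n (fun j => g j * z j) = fsum n (fun j => 1 / INR n * g j +
          fsum n (fun k => g j * Wmat C x k j * th k * z k))).
    { apply fsum_ext. intros j Hj. rewrite (Hz j Hj) at 1.
      rewrite (fsum_ext n (fun k => g j * Wmat C x k j * th k * z k) (fun k => g j * (Amat C th x j k * z k))) by (intros; unfold Amat; ring).
      rewrite fsum_scal. ring. }
    rewrite fsum_plus, fsum_scal, fsum_swap in E2.
    assert (E3 : fsum n (fun k => fsum n (fun j => g j * Wmat C x k j * th k * z k)) =
                 fsum n (fun k => fsum n (fun j => th k * Wmat C x k j * g j * z k))).
    { apply fsum_ext; intros; apply fsum_ext; intros; ring. }
    lra. }
  assert (Hgi1 : 1 <= g i).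
  { rewrite <- (Hg i Hi). rewrite Nat.eqb_refl.
    assert (0 <= fsum n (fun j => Wmat C x i j * g j)).
    { apply fsum_nonneg. intros j Hj. apply Rmult_le_pos; auto. apply (W_nonneg n); auto. }
    assert (0 <= th i) by (apply HT; auto). nra. }
  set (m := fmax n g).
  assert (Hgm : forall k, (k < n)%nat -> g k <= m) by (intros; apply fmax_ge; auto).
  assert (HW : forall k, (k < n)%nat -> fsum n (fun j => Wmat C x k j * g j) <= m).
  { intros k Hk. eapply Rle_trans with (fsum n (fun j => m * Wmat C x k j)).
    apply fsum_le. intros j Hj. assert (0 <= Wmat C x k j) by (apply (W_nonneg n); auto).
    assert (g j <= m) by auto. nra.
    rewrite fsum_scal, (W_rows n) by auto. lra. }
  assert (Hoff : forall k, (k < n)%nat -> k <> i -> g k <= th k * m).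
  { intros k Hk Hki. rewrite <- (Hg k Hk). destruct (Nat.eqb_spec i k); [lia|].
    assert (0 <= th k) by (apply HT; auto). assert (Hq := HW k Hk). nra. }
  assert (Htm := tmax_lt n th Hn HT). assert (Htn := tmax_nn n th Hn HT).
  assert (Hmi : m <= g i).
  { destruct (Rle_lt_dec m (g i)); auto.
    assert (m <= Rmax (g i) (fmax n th * m)).
    { apply fmax_le; auto. intros k Hk. destruct (Nat.eq_dec k i). subst; apply Rmax_l.
      eapply Rle_trans; [|apply Rmax_r].
      assert (th k <= fmax n th) by (apply fmax_ge; auto). assert (Hq := Hoff k Hk n0).
      assert (0 <= m) by (assert (Hgi := Hgm i Hi); lra). nra. }
    unfold Rmax in H; destruct (Rle_dec (g i) (fmax n th * m)); nra. }
  assert (Hgi : (1 - th i) * g i <= 1).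
  { assert (Hgg := Hg i Hi). rewrite Nat.eqb_refl in Hgg. assert (Hq := HW i Hi).
    set (S0 := fsum n (fun j => Wmat C x i j * g j)) in *.
    assert (0 <= th i) by (apply HT; auto). assert (S0 * (1 - th i) <= 1) by nra. nra. }
  assert (Hsum : fsum n g <= fsum n (fun k => th k * g i + (if Nat.eqb i k then (1 - th i) * g i else 0))).
  { apply fsum_le. intros k Hk. destruct (Nat.eqb_spec i k). subst; lra.
    assert (Hq := Hoff k Hk ltac:(auto)). assert (0 <= th k) by (apply HT; auto). nra. }
  rewrite fsum_plus, fsum_delta in Hsum by auto.
  rewrite (fsum_ext n (fun k => th k * g i) (fun k => g i * th k)) in Hsum by (intros; ring). rewrite fsum_scal in Hsum.
  assert (Hnz : INR n <> 0) by (apply not_0_INR; lia).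
  assert (Hnz2 : INR n * z i = fsum n g) by (rewrite Hdual; field; auto).
  assert (th i <= fsum n th) by (apply (fsum_term_le n th); auto; intros; apply HT; auto).
  assert (0 <= th i < 1) by (apply HT; auto).
  replace (INR n * (1 - th i) * z i) with ((1 - th i) * (INR n * z i)) by ring. rewrite Hnz2.
  assert ((1 - th i) * fsum n g <= (1 - th i) * (g i * fsum n th + (1 - th i) * g i)) by (apply Rmult_le_compat_l; lra).
  nra.
Qed.

Lemma simplex_xb n x : in_simplex n x -> xb n x.
Proof. intros [H1 H2] i Hi. split; auto. rewrite <- H2. apply fsum_term_le; auto. Qed.

Lemma F_eq n C th x i : Fmap n C th x i = (1 - th i) * zsol n C th x i.
Proof. reflexivity. Qed.

Lemma F_simplex n C th x : hypC n C -> hypT n th -> (0 < n)%nat -> in_simplex n x -> in_simplex n (Fmap n C th x).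
Proof. intros HC HT Hn Hx. assert (Hb := simplex_xb n x Hx).
  destruct (zsol_spec n C th x HC HT Hb Hn) as [Hz _]. split.
  - intros i Hi. rewrite F_eq. apply Rmult_le_pos; auto. assert (H := HT i Hi). lra.
  - rewrite (fsum_ext _ _ (fun i => (1 - th i) * zsol n C th x i)) by (intros; apply F_eq).
    apply zsol_sum; auto. Qed.

Lemma Wdiff C x1 x2 j i :
  Rabs (Wmat C x1 j i - Wmat C x2 j i) <= ((if Nat.eqb j i then 1 else 0) + Rabs (C j i)) * Rabs (x1 j - x2 j).
Proof. unfold Wmat. destruct (Nat.eqb j i).
  - replace (x1 j + (1 - x1 j) * C j i - (x2 j + (1 - x2 j) * C j i)) with ((x1 j - x2 j) + (- C j i) * (x1 j - x2 j)) by ring.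
    eapply Rle_trans. apply Rabs_triang. rewrite Rabs_mult, Rabs_Ropp. lra.
  - replace (0 + (1 - x1 j) * C j i - (0 + (1 - x2 j) * C j i)) with ((- C j i) * (x1 j - x2 j)) by ring.
    rewrite Rabs_mult, Rabs_Ropp. lra. Qed.

Lemma F_contr n C th x1 x2 q : hypC n C -> hypT n th -> (0 < n)%nat ->
  in_simplex n x1 -> in_simplex n x2 ->
  (forall j, (j < n)%nat -> 2 * th j * zsol n C th x2 j <= q) ->
  N1n n (fun i => Fmap n C th x1 i - Fmap n C th x2 i) <= q * N1n n (fun i => x1 i - x2 i).
Proof. intros HC HT Hn Hx1 Hx2 Hq.
  assert (Hb1 := simplex_xb n x1 Hx1). assert (Hb2 := simplex_xb n x2 Hx2).
  destruct (zsol_spec n C th x1 HC HT Hb1 Hn) as [Hz1p Hz1].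
  destruct (zsol_spec n C th x2 HC HT Hb2 Hn) as [Hz2p Hz2].
  set (z1 := zsol n C th x1) in *. set (z2 := zsol n C th x2) in *.
  set (v := fun i => fsum n (fun j => (Amat C th x1 i j - Amat C th x2 i j) * z2 j)).
  assert (Hd : forall i, (i < n)%nat -> z1 i - z2 i = fsum n (fun j => Amat C th x1 i j * (z1 j - z2 j)) + v i).
  { intros i Hi. rewrite (Hz1 i Hi), (Hz2 i Hi). unfold v. rewrite <- fsum_plus.
    rewrite (fsum_ext n (fun j => Amat C th x1 i j * (z1 j - z2 j) + (Amat C th x1 i j - Amat C th x2 i j) * z2 j)
      (fun j => Amat C th x1 i j * z1 j - Amat C th x2 i j * z2 j)) by (intros; ring).
    rewrite fsum_minus. ring. }
  assert (Hs : fsum n (fun i => Rabs (z1 i - z2 i)) <= fsum n (fun j => th j * Rabs (z1 j - z2 j)) + fsum n (fun i => Rabs (v i))).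
  { eapply Rle_trans with (fsum n (fun i => fsum n (fun j => Amat C th x1 i j * Rabs (z1 j - z2 j)) + Rabs (v i))).
    - apply fsum_le. intros i Hi. rewrite (Hd i Hi). eapply Rle_trans. apply Rabs_triang.
      apply Rplus_le_compat_r. eapply Rle_trans. apply fsum_abs. apply fsum_le. intros j Hj.
      rewrite Rabs_mult, (Rabs_right (Amat C th x1 i j)) by (apply Rle_ge, (A_nonneg n); auto). lra.
    - rewrite fsum_plus, fsum_swap. apply Rplus_le_compat_r. apply Req_le. apply fsum_ext. intros j Hj.
      rewrite (fsum_ext n (fun i => Amat C th x1 i j * Rabs (z1 j - z2 j)) (fun i => Rabs (z1 j - z2 j) * Amat C th x1 i j)) by (intros; ring).
      rewrite fsum_scal, (A_col n) by auto. ring. }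
  assert (HL : N1n n (fun i => Fmap n C th x1 i - Fmap n C th x2 i) <= fsum n (fun i => Rabs (v i))).
  { unfold N1n. rewrite (fsum_ext _ _ (fun i => Rabs (z1 i - z2 i) - th i * Rabs (z1 i - z2 i))).
    rewrite fsum_minus. lra.
    intros i Hi. rewrite !F_eq. fold z1 z2. replace ((1 - th i) * z1 i - (1 - th i) * z2 i) with ((1 - th i) * (z1 i - z2 i)) by ring.
    rewrite Rabs_mult, Rabs_right by (assert (H := HT i Hi); lra). ring. }
  eapply Rle_trans. apply HL. clear HL Hs Hd.
  set (h := fun i j => ((if Nat.eqb j i then 1 else 0) + C j i) * (Rabs (x1 j - x2 j) * th j * z2 j)).
  assert (Hv : forall i, (i < n)%nat -> Rabs (v i) <= fsum n (fun j => h i j)).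
  { intros i Hi. unfold v. eapply Rle_trans. apply fsum_abs. apply fsum_le. intros j Hj. unfold h, Amat.
    replace ((Wmat C x1 j i * th j - Wmat C x2 j i * th j) * z2 j) with ((Wmat C x1 j i - Wmat C x2 j i) * (th j * z2 j)) by ring.
    rewrite Rabs_mult, (Rabs_right (th j * z2 j)) by (apply Rle_ge, Rmult_le_pos; [apply HT; auto| auto]).
    assert (H := Wdiff C x1 x2 j i). rewrite (Rabs_right (C j i)) in H by (apply Rle_ge, (proj1 HC); auto).
    assert (0 <= th j * z2 j) by (apply Rmult_le_pos; [apply HT; auto| auto]). nra. }
  eapply Rle_trans. apply fsum_le. apply Hv. rewrite fsum_swap.
  unfold N1n. rewrite <- fsum_scal. apply fsum_le. intros j Hj. unfold h.
  rewrite (fsum_ext n (fun i => ((if Nat.eqb j i then 1 else 0) + C j i) * (Rabs (x1 j - x2 j) * th j * z2 j))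
     (fun i => (Rabs (x1 j - x2 j) * th j * z2 j) * ((if Nat.eqb j i then 1 else 0) + C j i))) by (intros; ring).
  rewrite fsum_scal, fsum_plus, (fsum_delta n j (fun _ => 1)) by auto.
  assert (E : fsum n (C j) = 1) by (apply (proj2 HC j Hj)). rewrite E.
  assert (H := Hq j Hj). assert (0 <= Rabs (x1 j - x2 j)) by apply Rabs_pos. nra. Qed.

Lemma traj_it n C th x0 s : traj n C th x0 s = it (Fmap n C th) x0 s.
Proof. induction s; simpl; auto. rewrite IHs; auto. Qed.

Theorem theorem4 (n : nat) (C : nat -> nat -> R) (theta : nat -> R) :
  (2 <= n)%nat ->
  (forall i j, (i < n)%nat -> (j < n)%nat -> 0 <= C i j) ->
  (forall i, (i < n)%nat -> fsum n (fun j => C i j) = 1) ->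
  (forall i, (i < n)%nat -> C i i = 0) ->
  (forall i, (i < n)%nat -> 0 <= theta i <= 1) ->
  (forall i, (i < n)%nat -> theta i < 1) ->
  (exists j, (j < n)%nat /\ 0 < theta j) ->
  let zeta := INR n * theta_ave n theta - theta_min n theta in
  theta_max n theta < INR n / (INR n + 2 * (1 + zeta)) ->
  exists xstar : nat -> R,
    in_simplex n xstar /\ is_fixed n C theta xstar /\
    (forall y, in_simplex n y -> is_fixed n C theta y ->
       forall i, (i < n)%nat -> y i = xstar i) /\
    (forall x0, in_simplex n x0 ->
       exists c rho, 0 <= c /\ 0 <= rho < 1 /\
         forall s i, (i < n)%nat ->
           Rabs (traj n C theta x0 s i - xstar i) <= c * rho ^ s).
Proof.
  intros H2n HC0 HC1 _ HT0 HT1 _ zeta Hmax.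
  assert (Hn : (0 < n)%nat) by lia.
  assert (HC : hypC n C) by (split; auto).
  assert (HT : hypT n theta) by (intros i Hi; split; [apply HT0; auto| apply HT1; auto]).
  assert (Hnz : INR n <> 0) by (apply not_0_INR; lia).
  assert (Hnpos : 0 < INR n) by (apply lt_0_INR; lia).
  set (tm := fmax n theta).
  assert (Htm1 : tm < 1) by (apply tmax_lt; auto).
  assert (Htm0 : 0 <= tm) by (apply tmax_nn; auto).
  assert (Hzeta : zeta = fsum n theta - fmin n theta).
  { unfold zeta, theta_ave, theta_min. field. auto. }
  assert (Hz0 : 0 <= zeta).
  { rewrite Hzeta. assert (fmin n theta <= theta 0%nat) by (apply fmin_le; auto).
    assert (theta 0%nat <= fsum n theta) by (apply fsum_term_le; auto; intros; apply HT; auto). lra. }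
  change (theta_max n theta) with tm in Hmax.
  set (q := 2 * tm * (1 + zeta) / (INR n * (1 - tm))).
  assert (HD : 0 < INR n * (1 - tm)) by (apply Rmult_lt_0_compat; lra).
  assert (Hqe : q * (INR n * (1 - tm)) = 2 * tm * (1 + zeta)) by (unfold q; field; lra).
  assert (Hq : 0 <= q < 1).
  { assert (Hden : 0 < INR n + 2 * (1 + zeta)) by lra.
    assert (tm * (INR n + 2 * (1 + zeta)) < INR n).
    { apply (Rmult_lt_compat_r (INR n + 2 * (1 + zeta))) in Hmax; auto.
      unfold Rdiv in Hmax. rewrite Rmult_assoc, Rinv_l, Rmult_1_r in Hmax by lra. lra. }
    split.
    - destruct (Rle_lt_dec 0 q); auto. assert (q * (INR n * (1 - tm)) < 0) by nra. nra.
    - destruct (Rle_lt_dec 1 q); auto. assert (1 * (INR n * (1 - tm)) <= q * (INR n * (1 - tm))) by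
        (apply Rmult_le_compat_r; lra). nra. }
  assert (Hqz : forall x j, in_simplex n x -> (j < n)%nat -> 2 * theta j * zsol n C theta x j <= q).
  { intros x j Hx Hj. assert (Hb := simplex_xb n x Hx).
    assert (Hzb := zbound n C theta x j HC HT Hb Hn Hj).
    destruct (zsol_spec n C theta x HC HT Hb Hn) as [Hzp _]. specialize (Hzp j Hj).
    set (z := zsol n C theta x) in *.
    assert (fmin n theta <= theta j) by (apply fmin_le; auto).
    assert (Htj : theta j <= tm) by (apply fmax_ge; auto). assert (H0j := HT j Hj).
    assert (Hb1 : INR n * (1 - theta j) * z j <= 1 + zeta) by (rewrite Hzeta; lra).
    apply (Rmult_le_reg_r (INR n * (1 - tm))); auto. rewrite Hqe.
    assert (0 <= INR n * z j) by nra.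
    assert (theta j * (1 - tm) <= tm * (1 - theta j)) by nra.
    assert (theta j * (1 - tm) * (INR n * z j) <= tm * (1 - theta j) * (INR n * z j)) by (apply Rmult_le_compat_r; auto).
    assert (tm * (INR n * (1 - theta j) * z j) <= tm * (1 + zeta)) by (apply Rmult_le_compat_l; auto).
    nra. }
  assert (Hcontr : forall u v, in_simplex n u -> in_simplex n v ->
    N1n n (fun i => Fmap n C theta u i - Fmap n C theta v i) <= q * N1n n (fun i => u i - v i)).
  { intros u v Hu Hv. apply F_contr; auto. }
  assert (Hcl : forall (u : nat -> nat -> R) L, (forall s, in_simplex n (u s)) ->
     (forall i, (i < n)%nat -> Un_cv (fun s => u s i) (L i)) -> in_simplex n L).
  { intros u L Hu HL. split.
    - intros i Hi. apply (cv_nonneg (fun s => u s i)); auto. intros s; apply (proj1 (Hu s)); auto.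
    - assert (Hcv := fsum_cv n u L HL).
      assert (Hcv1 : Un_cv (fun s => fsum n (u s)) 1).
      { intros e He. exists O. intros m _. rewrite (proj2 (Hu m)). unfold R_dist. rewrite Rminus_diag, Rabs_R0; auto. }
      symmetry. apply (UL_sequence _ _ _ Hcv1 Hcv). }
  assert (HB := fun x0 Hx0 => banach n (N1n n) (in_simplex n) (Fmap n C theta) q Hn
    (N1n_1 n) (N1n_2 n) (N1n_3 n) (N1n_5 n) Hq (fun u Hu => F_simplex n C theta u HC HT Hn Hu)
    Hcontr Hcl x0 Hx0).
  assert (Hu0 : in_simplex n (fun _ => 1 / INR n)).
  { split. intros; unfold Rdiv; rewrite Rmult_1_l; left; apply Rinv_0_lt_compat; auto.
    rewrite fsum_const. field; auto. }
  destruct (HB _ Hu0) as [L [HL1 [HL2 _]]].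
  assert (Huniq : forall y, in_simplex n y -> is_fixed n C theta y -> forall i, (i < n)%nat -> y i = L i).
  { intros y Hy Hfy. apply (banach_unique n (N1n n) (Fmap n C theta) q y L Hn (N1n_1 n) (N1n_4 n) Hq Hfy HL2).
    apply Hcontr; auto. }
  exists L. split; [auto| split; [exact HL2| split; [exact Huniq|]]].
  intros x0 Hx0. destruct (HB x0 Hx0) as [L' [HL1' [HL2' [c [Hc Hbnd]]]]].
  exists c, q. split; auto. split; auto. intros s i Hi.
  rewrite traj_it. rewrite <- (Huniq L' HL1' HL2' i Hi).
  eapply Rle_trans. apply (N1n_1 n (fun j => it (Fmap n C theta) x0 s j - L' j) i Hi). apply Hbnd.
Qed.
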